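(* Let $G$ be a finite simple graph with at least one edge and $\beta\in\mathbb{R}$. Then $M(t)=(d(t)+d(t)^* )^2\to0$ as $|t|\to\infty$, but $M(t)\neq0$ for every finite $t\in\mathbb{R}$.
   Context: For $k\ge0$ let $\Omega_k$ be the space of complex-valued functions on the (oriented) $k$-simplices of $G$ (complete subgraphs with $k+1$ vertices), $\Omega=\bigoplus_k\Omega_k$. The exterior derivative $d_0:\Omega_k\to\Omega_{k+1}$ is $(d_0f)(x_0,\dots,x_{k+1})=\sum_{j}(-1)^jf(x_0,\dots,\hat x_j,\dots,x_{k+1})$, $D_0=d_0+d_0^*$. For a self-adjoint operator $D$ on $\Omega$ whose blocks $\Omega_k\to\Omega_j$ vanish unless $|j-k|\le1$, write $D=d+d^*+b$ with $d$ the blocks $\Omega_k\to\Omega_{k+1}$ and $b$ the block-diagonal part. The Dirac deformation with real parameter $\beta$ is the solution $D(t)$ of $D'=BD-DB$, $D(0)=D_0$, with $B(t)=d(t)-d(t)^*+i\beta b(t)$, $D(t)=d(t)+d(t)^*+b(t)$ (the solution exists for all real $t$ and keeps this form). *)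

(* Defs.v *)
From mathcomp Require Import all_boot all_order all_algebra.
From mathcomp Require Import all_classical all_reals all_analysis.
From mathcomp.real_closed Require Import complex.
Import Order.TTheory GRing.Theory Num.Theory numFieldNormedType.Exports.

Set Implicit Arguments. Unset Strict Implicit. Unset Printing Implicit Defensive.
Local Open Scope ring_scope.

(* A finite simple graph on the vertex set 'I_n (the natural order of 'I_n
   fixes the orientation of every simplex: (x_0,...,x_k) with x_0 < ... < x_k). *)
Definition simple_graph (n : nat) (e : rel 'I_n) : Prop :=
  (forall x y, e x y = e y x) /\ (forall x, ~~ e x x).

Definition has_edge (n : nat) (e : rel 'I_n) : Prop := exists x y, e x y.

Definition is_simplex (n : nat) (e : rel 'I_n) (A : {set 'I_n}) : bool :=
  (0 < #|A|)%N && [forall x in A, forall y in A, (x != y) ==> e x y].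

Definition simplex (n : nat) (e : rel 'I_n) := {A : {set 'I_n} | is_simplex e A}.

(* Omega = functions on all simplices; basis indexed by 'I_(nsimp e) *)
Definition nsimp (n : nat) (e : rel 'I_n) : nat := #|{: simplex e}|.

Definition simp (n : nat) (e : rel 'I_n) (i : 'I_(nsimp e)) : {set 'I_n} :=
  val (enum_val i).

(* degree k of the basis element i, i.e. i lies in Omega_k *)
Definition sdim (n : nat) (e : rel 'I_n) (i : 'I_(nsimp e)) : nat :=
  (#|simp i|).-1.

Section Dirac.
Variables (R : realType) (n : nat) (e : rel 'I_n).
Local Notation N := (nsimp e).
Local Notation C := (R[i]).

(* exterior derivative d_0 : entry (i,j) = coefficient of f(simplex j) in (d_0 f)(simplex i) *)
Definition d0 : 'M[C]_N :=
  \matrix_(i < N, j < N)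
    if (simp j \subset simp i) && (#|simp i| == (#|simp j|).+1) then
      \sum_(v in simp i :\: simp j) (-1) ^+ #|[set x in simp i | (x < v)%N]|
    else 0.

Definition adjmx (M : 'M[C]_N) : 'M[C]_N := (map_mx (fun z : C => z^*) M)^T.

Definition D0 : 'M[C]_N := d0 + adjmx d0.

Definition dpart (D : 'M[C]_N) : 'M[C]_N :=
  \matrix_(i < N, j < N) if sdim i == (sdim j).+1 then D i j else 0.

Definition bpart (D : 'M[C]_N) : 'M[C]_N :=
  \matrix_(i < N, j < N) if sdim i == sdim j then D i j else 0.

Definition Bop (beta : R) (D : 'M[C]_N) : 'M[C]_N :=
  dpart D - adjmx (dpart D) + (Complex 0 beta) *: bpart D.

Definition Mop (D : 'M[C]_N) : 'M[C]_N :=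
  (dpart D + adjmx (dpart D)) *m (dpart D + adjmx (dpart D)).

Definition has_mx_derive (D : R -> 'M[C]_N) (t : R) (D' : 'M[C]_N) : Prop :=
  forall i j,
    is_derive t 1 (fun s => complex.Re (D s i j)) (complex.Re (D' i j)) /\
    is_derive t 1 (fun s => complex.Im (D s i j)) (complex.Im (D' i j)).

Definition dirac_deformation (beta : R) (D : R -> 'M[C]_N) : Prop :=
  D 0 = D0 /\
  forall t, has_mx_derive D t (Bop beta (D t) *m D t - D t *m Bop beta (D t)).

End Dirac.

(* Main.v *)
Require Import Defs.
From mathcomp Require Import all_boot all_order all_algebra.
From mathcomp Require Import all_classical all_reals all_analysis.
From mathcomp.real_closed Require Import complex.
From mathcomp Require Import ring lra zify.
Import Order.TTheory GRing.Theory Num.Theory numFieldNormedType.Exports.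
Local Open Scope ring_scope.

Local Open Scope classical_set_scope.
Section A.
Context {R : realType}.

Lemma is_derive_comp1 {f g : R -> R} {x df dg : R} :
  is_derive x (1:R) f df -> is_derive (f x) (1:R) g dg ->
  is_derive x (1:R) (g \o f) (dg * df).
Proof.
move=> Hf Hg.
have d1 : derivable f x 1 := ex_derive.
have d2 : derivable g (f x) 1 := ex_derive.
have dc : derivable (g \o f) x 1.
  apply/derivable1_diffP; apply: differentiable_comp; exact/derivable1_diffP.
apply: DeriveDef => //.
by rewrite -derive1E derive1_comp // !derive1E !derive_val.
Qed.

Lemma is_derive_expK (K x : R) :
  is_derive x (1:R) (fun t => expR (K * t)) (K * expR (K * x)).
Proof.
have h1 : is_derive x (1:R) (fun t : R => K * t) K.
  have := @is_deriveZ R R R id K x 1 1 (is_derive_id x 1).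
  by rewrite /GRing.scale /= mulr1.
have := is_derive_comp1 h1 (is_derive_expR (K * x)).
by rewrite mulrC.
Qed.
Lemma mono_deriv {f df : R -> R} {a b : R} :
  a <= b -> (forall x : R, is_derive x (1:R) f (df x)) ->
  (forall x, a <= x -> x <= b -> 0 <= df x) -> f a <= f b.
Proof.
move=> ab fd dpos.
have cf : {within `[a, b], continuous f}.
  apply: derivable_within_continuous => x _.
  by have := fd x => -[].
have [c cab E] := MVT_segment ab (fun x _ => fd x) cf.
rewrite -subr_ge0 E mulr_ge0 // ?subr_ge0 //.
by move: cab; rewrite in_itv /= => /andP[? ?]; apply: dpos.
Qed.

Lemma gronwall (f df : R -> R) (a b K : R) :
  a <= b -> (forall x : R, is_derive x (1:R) f (df x)) ->
  (forall x, a <= x -> x <= b -> `|df x| <= K * f x) ->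
  (f a = 0 <-> f b = 0).
Proof.
move=> ab fd bnd.
pose e1 := fun t : R => expR ((- K) * t).
pose e2 := fun t : R => expR (K * t).
have h1 : f b * e1 b <= f a * e1 a.
  rewrite -lerN2.
  apply: (@mono_deriv (fun t => - (f t * e1 t))
     (fun t => - (f t * (- K * e1 t) + e1 t * df t))) => //.
    move=> x; apply: is_deriveN.
    have := @is_deriveM R R f e1 x 1 (df x) _ (fd x) (is_derive_expK (-K) x).
    by [].
  move=> x ax xb.
  have := bnd x ax xb; rewrite ler_norml => /andP[_ H].
  have e1p : 0 < e1 x by apply: expR_gt0.
  have -> : - (f x * (- K * e1 x) + e1 x * df x) = e1 x * (K * f x - df x) by ring.
  apply: mulr_ge0; [exact: ltW | lra].
have h2 : f a * e2 a <= f b * e2 b.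
  apply: (@mono_deriv (fun t => f t * e2 t)
     (fun t => f t * (K * e2 t) + e2 t * df t)) => //.
    move=> x.
    by have := @is_deriveM R R f e2 x 1 (df x) _ (fd x) (is_derive_expK K x).
  move=> x ax xb.
  have := bnd x ax xb; rewrite ler_norml => /andP[H _].
  have e2p : 0 < e2 x by apply: expR_gt0.
  have -> : f x * (K * e2 x) + e2 x * df x = e2 x * (K * f x + df x) by ring.
  apply: mulr_ge0; [exact: ltW | lra].
have e1a := expR_gt0 (- K * a); have e1b := expR_gt0 (- K * b).
have e2a := expR_gt0 (K * a); have e2b := expR_gt0 (K * b).
rewrite /e1 /e2 in h1 h2.
split=> H0.
  rewrite H0 mul0r in h1; rewrite H0 mul0r in h2.
  apply/eqP; rewrite eq_le; apply/andP; split.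
    by rewrite -(pmulr_rle0 _ e1b) mulrC.
  by rewrite -(pmulr_rge0 _ e2b) mulrC.
rewrite H0 mul0r in h1; rewrite H0 mul0r in h2.
apply/eqP; rewrite eq_le; apply/andP; split.
  by rewrite -(pmulr_rle0 _ e2a) mulrC.
by rewrite -(pmulr_rge0 _ e1a) mulrC.
Qed.

Lemma is_derive_lin (c x : R) : is_derive x (1:R) (fun t : R => c * t) c.
Proof.
have := @is_deriveZ R R R id c x 1 1 (is_derive_id x 1).
by rewrite /GRing.scale /= mulr1.
Qed.

Lemma barbalat_p (f g dg : R -> R) (F K : R) :
  (forall x : R, is_derive x (1:R) f (g x)) ->
  (forall x : R, is_derive x (1:R) g (dg x)) ->
  (forall x, 0 <= g x) -> (forall x, `|f x| <= F) -> (forall x, `|dg x| <= K) ->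
  forall eps, 0 < eps -> exists M : R, forall t, M < t -> g t < eps.
Proof.
move=> fd gd gpos fb dgb eps eps0.
have K0 : 0 <= K by apply: le_trans (dgb 0); exact: normr_ge0.
pose K' := K + 1.
have K'0 : 0 < K' by rewrite /K'; lra.
pose del := eps / (4 * K').
have del0 : 0 < del by rewrite /del divr_gt0 //; lra.
pose eta := eps * del / 2.
have eta0 : 0 < eta by rewrite /eta divr_gt0 // mulr_gt0.
have hs : has_sup (range f).
  split; first by exists (f 0), 0.
  by exists F => _ [x _ <-]; have := fb x; rewrite ler_norml => /andP[].
have [e0 [t0 _ Ht0e] Ht0] := sup_adherent eta0 hs.
rewrite -Ht0e in Ht0.
exists t0 => t tt0.
have fmono : forall a b, a <= b -> f a <= f b.
  by move=> a b ab; apply: (mono_deriv ab fd) => x _ _; apply: gpos.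
have f1 : f t0 <= f t by apply: fmono; exact: ltW.
have f2 : f (t + del) <= sup (range f) by by apply: sup_upper_bound => //; exists (t + del).
have gl : forall s, t <= s -> g t - K' * (s - t) <= g s.
  move=> s ts.
  have Hd : forall x : R, is_derive x 1 (fun u => g u + K' * u) (dg x + K').
    by move=> x; exact: (is_deriveD (gd x) (is_derive_lin K' x)).
  have : g t + K' * t <= g s + K' * s.
    apply: (mono_deriv ts Hd) => x _ _; have := dgb x; rewrite ler_norml => /andP[h1 h2].
    rewrite /K'; lra.
  lra.
have fl : (g t - K' * del) * del <= f (t + del) - f t.
  have tle : t <= t + del by lra.
  have Hd : forall x : R, is_derive x 1 (fun u => f u - (g t - K' * del) * u)
      (g x - (g t - K' * del)).
    by move=> x; exact: (is_deriveB (fd x) (is_derive_lin _ x)).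
  have : f t - (g t - K' * del) * t <= f (t + del) - (g t - K' * del) * (t + del).
    apply: (mono_deriv tle Hd) => x tx xt; have := gl x tx.
    have : K' * (x - t) <= K' * del by rewrite ler_pM2l //; lra.
    lra.
  move=> H3; rewrite mulrDr in H3; lra.
have : (g t - K' * del) * del < eta by lra.
rewrite /eta -ltr_pdivlMr // => H4.
have E1 : eps * del / 2 / del = eps / 2.
  by field; apply/negP => /eqP h; rewrite h in del0; rewrite ltxx in del0.
have E2 : K' * del = eps / 4.
  by rewrite /del; field; rewrite gt_eqF.
rewrite E1 E2 in H4; lra.
Qed.

Lemma barbalat_n (f g dg : R -> R) (F K : R) :
  (forall x : R, is_derive x (1:R) f (g x)) ->
  (forall x : R, is_derive x (1:R) g (dg x)) ->
  (forall x, 0 <= g x) -> (forall x, `|f x| <= F) -> (forall x, `|dg x| <= K) ->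
  forall eps, 0 < eps -> exists M : R, forall t, t < M -> g t < eps.
Proof.
move=> fd gd gpos fb dgb eps eps0.
have nd : forall x : R, is_derive x (1:R) (fun t : R => - t) (-1).
  by move=> x; exact: is_deriveNid.
have [|||||M HM] := @barbalat_p (fun t => - f (- t)) (fun t => g (- t)) (fun t => - dg (- t)) F K _ _ _ _ _ eps eps0.
- move=> x; apply: (is_derive_eq (is_deriveN (is_derive_comp1 (nd x) (fd (- x))))).
  by rewrite mulrN1 opprK.
- move=> x; apply: (is_derive_eq (is_derive_comp1 (nd x) (gd (- x)))).
  by rewrite mulrN1.
- by move=> x; apply: gpos.
- by move=> x; rewrite normrN.
- by move=> x; rewrite normrN.
exists (- M) => t tM; have := HM (- t).
rewrite opprK; apply; lra.
Qed.

Lemma to_cvg_p (h : R -> R) :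
  (forall eps, 0 < eps -> exists M : R, forall t, M < t -> `|h t| < eps) ->
  h t @[t --> +oo] --> (0:R).
Proof.
move=> H; apply/cvgrPdist_lt => eps e0; have [M HM] := H eps e0.
exists M; split; first exact: num_real.
by move=> t Mt; rewrite sub0r normrN; exact: HM.
Qed.

Lemma to_cvg_n (h : R -> R) :
  (forall eps, 0 < eps -> exists M : R, forall t, t < M -> `|h t| < eps) ->
  h t @[t --> -oo] --> (0:R).
Proof.
move=> H; apply/cvgrPdist_lt => eps e0; have [M HM] := H eps e0.
exists M; split; first exact: num_real.
by move=> t Mt; rewrite sub0r normrN; exact: HM.
Qed.
End A.
Section CLib.
Context {R : realType}.
Local Notation C := (R[i]).
Local Notation Re := (@complex.Re R).
Local Notation Im := (@complex.Im R).

Lemma ReD (z w : C) : Re (z + w) = Re z + Re w. Proof. by case: z; case: w. Qed.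
Lemma ImD (z w : C) : Im (z + w) = Im z + Im w. Proof. by case: z; case: w. Qed.
Lemma ReN (z : C) : Re (- z) = - Re z. Proof. by case: z. Qed.
Lemma ImN (z : C) : Im (- z) = - Im z. Proof. by case: z. Qed.
Lemma ReB (z w : C) : Re (z - w) = Re z - Re w. Proof. by rewrite ReD ReN. Qed.
Lemma ImB (z w : C) : Im (z - w) = Im z - Im w. Proof. by rewrite ImD ImN. Qed.
Lemma ReM (z w : C) : Re (z * w) = Re z * Re w - Im z * Im w.
Proof. by case: z => a b; case: w => c d. Qed.
Lemma ImM (z w : C) : Im (z * w) = Re z * Im w + Im z * Re w.
Proof. by case: z => a b; case: w => c d. Qed.
Lemma Rec (z : C) : Re (z^*) = Re z. Proof. by case: z. Qed.
Lemma Imc (z : C) : Im (z^*) = - Im z. Proof. by case: z. Qed.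
Lemma Re0 : Re 0 = 0. Proof. by []. Qed.
Lemma Im0 : Im 0 = 0. Proof. by []. Qed.
Lemma Re_sum (I : Type) (r : seq I) (P : pred I) (F : I -> C) :
  Re (\sum_(i <- r | P i) F i) = \sum_(i <- r | P i) Re (F i).
Proof. by elim/big_rec2: _ => // i y1 y2 _ <-; rewrite ReD. Qed.
Lemma Im_sum (I : Type) (r : seq I) (P : pred I) (F : I -> C) :
  Im (\sum_(i <- r | P i) F i) = \sum_(i <- r | P i) Im (F i).
Proof. by elim/big_rec2: _ => // i y1 y2 _ <-; rewrite ImD. Qed.
Lemma conjcK (z : C) : (z^*)^* = z.
Proof. by case: z => a b; change (conjc (conjc (a +i* b)%C) = a +i* b)%C; rewrite /= opprK. Qed.
Lemma conjcD (z w : C) : (z + w)^* = z^* + w^*.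
Proof. by case: z => a b; case: w => c d; change (conjc ((a +i* b)%C + (c +i* d)%C) = conjc (a +i* b)%C + conjc (c +i* d)%C); rewrite /= opprD. Qed.
Lemma conjcN (z : C) : (- z)^* = - z^*.
Proof. by case: z => a b; change (conjc (- (a +i* b)%C) = - conjc (a +i* b)%C). Qed.
Lemma conjcM (z w : C) : (z * w)^* = z^* * w^*.
Proof. case: z => a b; case: w => c d; change (conjc ((a +i* b)%C * (c +i* d)%C) = conjc (a +i* b)%C * conjc (c +i* d)%C); apply/eqP; rewrite eq_complex /=; apply/andP; split; apply/eqP; ring. Qed.
Lemma conjc0 : (0 : C)^* = 0.
Proof. by change (conjc (0 : C) = 0); rewrite /= oppr0. Qed.

Definition n1 (z : C) : R := `|Re z| + `|Im z|.
Definition nsq (z : C) : R := Re z ^+ 2 + Im z ^+ 2.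

Lemma n1_ge0 z : 0 <= n1 z. Proof. by rewrite /n1 addr_ge0. Qed.
Lemma nsq_ge0 z : 0 <= nsq z. Proof. by rewrite /nsq addr_ge0 // sqr_ge0. Qed.
Lemma n1D z w : n1 (z + w) <= n1 z + n1 w.
Proof.
rewrite /n1 ReD ImD.
have := ler_normD (Re z) (Re w); have := ler_normD (Im z) (Im w); lra.
Qed.
Lemma n1N z : n1 (- z) = n1 z. Proof. by rewrite /n1 ReN ImN !normrN. Qed.
Lemma n1B z w : n1 (z - w) <= n1 z + n1 w.
Proof. by rewrite -(n1N w); apply: n1D. Qed.
Lemma n1c z : n1 (z^*) = n1 z. Proof. by rewrite /n1 Rec Imc normrN. Qed.
Lemma n10 : n1 0 = 0. Proof. by rewrite /n1 Re0 Im0 normr0 addr0. Qed.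
Lemma n1M z w : n1 (z * w) <= n1 z * n1 w.
Proof.
rewrite /n1 ReM ImM.
have h1 := ler_normB (Re z * Re w) (Im z * Im w).
have h2 := ler_normD (Re z * Im w) (Im z * Re w).
rewrite !normrM in h1 h2.
have : (`|Re z| + `|Im z|) * (`|Re w| + `|Im w|) =
  `|Re z| * `|Re w| + `|Im z| * `|Im w| + (`|Re z| * `|Im w| + `|Im z| * `|Re w|) by ring.
lra.
Qed.
Lemma Re_le_n1 z : `|Re z| <= n1 z.
Proof. by rewrite /n1 lerDl normr_ge0. Qed.
Lemma Im_le_n1 z : `|Im z| <= n1 z.
Proof. by rewrite /n1 lerDr normr_ge0. Qed.
Lemma n1_sum (I : Type) (r : seq I) (P : pred I) (F : I -> C) :
  n1 (\sum_(i <- r | P i) F i) <= \sum_(i <- r | P i) n1 (F i).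
Proof.
elim/big_rec2: _ => [|i y1 y2 _ H]; first by rewrite n10.
by apply: le_trans (n1D _ _) _; rewrite lerD2l.
Qed.
Lemma n1_sq z : n1 z ^+ 2 <= 2 * nsq z.
Proof.
rewrite /n1 /nsq -(real_normK (num_real (Re z))) -(real_normK (num_real (Im z))).
have := sqr_ge0 (`|Re z| - `|Im z|); nra.
Qed.
Lemma nsq_le z : nsq z <= n1 z ^+ 2.
Proof.
rewrite /n1 /nsq -(real_normK (num_real (Re z))) -(real_normK (num_real (Im z))).
have := normr_ge0 (Re z); have := normr_ge0 (Im z); nra.
Qed.
Lemma Re_conjM z : Re (z^* * z) = nsq z.
Proof. by rewrite ReM Rec Imc /nsq; ring. Qed.
Lemma n1_le1 z : n1 z <= 1 + 2 * nsq z.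
Proof. have := n1_sq z; have := n1_ge0 z; nra. Qed.
Lemma Re_conjM_le z w : `|Re (z^* * w)| <= n1 z * n1 w.
Proof. by apply: le_trans (Re_le_n1 _) _; apply: le_trans (n1M _ _) _; rewrite n1c. Qed.
Lemma n1_iM (b : R) z : n1 (Complex 0 b * z) = `|b| * n1 z.
Proof. by rewrite /n1 ReM ImM /= !mul0r sub0r add0r normrN !normrM mulrDr addrC. Qed.
Lemma nsq0 : nsq 0 = 0. Proof. by rewrite /nsq Re0 Im0 expr0n /= addr0. Qed.
Lemma nsq_eq0 z : nsq z = 0 -> z = 0.
Proof.
rewrite /nsq => h; have h1 := sqr_ge0 (Re z); have h2 := sqr_ge0 (Im z).
have : Re z ^+ 2 = 0 by lra.
have : Im z ^+ 2 = 0 by lra.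
move/eqP; rewrite sqrf_eq0 => /eqP hi /eqP; rewrite sqrf_eq0 => /eqP hr.
by clear h h1 h2; move: hi hr; case: z => a b /= -> ->.
Qed.
End CLib.

Section DLib.
Context {R : realType}.
Local Notation C := (R[i]).
Local Notation Re := (@complex.Re R).
Local Notation Im := (@complex.Im R).

Definition cder (z : R -> C) (t : R) (z' : C) :=
  is_derive t (1:R) (fun s => Re (z s)) (Re z') /\
  is_derive t (1:R) (fun s => Im (z s)) (Im z').

Lemma cder_add {z w t z' w'} : cder z t z' -> cder w t w' ->
  cder (fun s => z s + w s) t (z' + w').
Proof.
move=> [h1 h2] [h3 h4]; split.
  have -> : (fun s => Re (z s + w s)) = (fun s => Re (z s) + Re (w s)).
    by apply/funext => s; rewrite ReD.
  by rewrite ReD; apply: is_deriveD.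
have -> : (fun s => Im (z s + w s)) = (fun s => Im (z s) + Im (w s)).
  by apply/funext => s; rewrite ImD.
by rewrite ImD; apply: is_deriveD.
Qed.

Lemma cder_opp {z t z'} : cder z t z' -> cder (fun s => - z s) t (- z').
Proof.
move=> [h1 h2]; split.
  have -> : (fun s => Re (- z s)) = (fun s => - Re (z s)).
    by apply/funext => s; rewrite ReN.
  by rewrite ReN; apply: is_deriveN.
have -> : (fun s => Im (- z s)) = (fun s => - Im (z s)).
  by apply/funext => s; rewrite ImN.
by rewrite ImN; apply: is_deriveN.
Qed.

Lemma cder_sub {z w t z' w'} : cder z t z' -> cder w t w' ->
  cder (fun s => z s - w s) t (z' - w').
Proof. by move=> h1 h2; apply: cder_add => //; apply: cder_opp. Qed.

Lemma cder_cst (c : C) t : cder (fun _ => c) t 0.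
Proof. by split; rewrite ?Re0 ?Im0; apply: is_derive_cst. Qed.

Lemma cder_mul {z w t z' w'} : cder z t z' -> cder w t w' ->
  cder (fun s => z s * w s) t (z' * w t + z t * w').
Proof.
move=> [h1 h2] [h3 h4]; split.
  have H := is_deriveB (is_deriveM h1 h3) (is_deriveM h2 h4).
  have -> : (fun s => Re (z s * w s)) =
     ((fun s => Re (z s)) * (fun s => Re (w s)) - (fun s => Im (z s)) * (fun s => Im (w s))).
    by apply/funext => s; rewrite ReM.
  move: H; set u := (X in is_derive _ _ _ X) => H.
  have -> : Re (z' * w t + z t * w') = u by rewrite /u ReD !ReM /GRing.scale /=; ring.
  exact: H.
have H := is_deriveD (is_deriveM h1 h4) (is_deriveM h2 h3).
have -> : (fun s => Im (z s * w s)) =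
   ((fun s => Re (z s)) * (fun s => Im (w s)) + (fun s => Im (z s)) * (fun s => Re (w s))).
  by apply/funext => s; rewrite ImM.
move: H; set u := (X in is_derive _ _ _ X) => H.
have -> : Im (z' * w t + z t * w') = u by rewrite /u ImD !ImM /GRing.scale /=; ring.
exact: H.
Qed.

Lemma cder_conj {z t z'} : cder z t z' -> cder (fun s => (z s)^*) t (z'^*).
Proof.
move=> [h1 h2]; split.
  have -> : (fun s => Re ((z s)^*)) = (fun s => Re (z s)).
    by apply/funext => s; rewrite Rec.
  by rewrite Rec.
have -> : (fun s => Im ((z s)^*)) = (fun s => - Im (z s)).
  by apply/funext => s; rewrite Imc.
by rewrite Imc; apply: is_deriveN.
Qed.

Lemma cder_sum (m : nat) (z : 'I_m -> R -> C) t (z' : 'I_m -> C) :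
  (forall k, cder (z k) t (z' k)) ->
  cder (fun s => \sum_(k < m) z k s) t (\sum_(k < m) z' k).
Proof.
move=> h; split.
  have -> : (fun s => Re (\sum_(k < m) z k s)) = \sum_(k < m) (fun s => Re (z k s)).
    by apply/funext => s; rewrite Re_sum fct_sumE.
  by rewrite Re_sum; apply: is_derive_sum => k; case: (h k).
have -> : (fun s => Im (\sum_(k < m) z k s)) = \sum_(k < m) (fun s => Im (z k s)).
  by apply/funext => s; rewrite Im_sum fct_sumE.
by rewrite Im_sum; apply: is_derive_sum => k; case: (h k).
Qed.

Lemma cder_ext z w t z' : (forall s, z s = w s) -> cder z t z' -> cder w t z'.
Proof. by move=> e; have -> : z = w by apply/funext. Qed.

Lemma cder_val z t z1 z2 : cder z t z1 -> z1 = z2 -> cder z t z2.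
Proof. by move=> h <-. Qed.

Lemma cder_cmul (c : C) z t z' : cder z t z' -> cder (fun s => c * z s) t (c * z').
Proof.
move=> h; apply: cder_val; first exact: (cder_mul (cder_cst c t) h).
by rewrite mul0r add0r.
Qed.

End DLib.

Section MLib.
Context {R : realType} {n : nat} {e : rel 'I_n}.
Local Notation C := (R[i]).
Local Notation N := (nsimp e).
Local Notation M := ('M[C]_N).
Local Notation Re := (@complex.Re R).
Local Notation Im := (@complex.Im R).

Definition mder (X : R -> M) (t : R) (X' : M) :=
  forall i j, cder (fun s => X s i j) t (X' i j).

Lemma mder_add {X Y : R -> M} {t X' Y'} : mder X t X' -> mder Y t Y' ->
  mder (fun s => X s + Y s) t (X' + Y').
Proof.
move=> h1 h2 i j; apply: cder_ext; first by move=> s; rewrite mxE.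
by rewrite mxE; apply: cder_add.
Qed.

Lemma mder_opp {X : R -> M} {t X'} : mder X t X' -> mder (fun s => - X s) t (- X').
Proof.
move=> h1 i j; apply: cder_ext; first by move=> s; rewrite mxE.
by rewrite mxE; apply: cder_opp.
Qed.

Lemma mder_sub {X Y : R -> M} {t X' Y'} : mder X t X' -> mder Y t Y' ->
  mder (fun s => X s - Y s) t (X' - Y').
Proof. by move=> h1 h2; apply: mder_add => //; apply: mder_opp. Qed.

Lemma mder_mul {X Y : R -> M} {t X' Y'} : mder X t X' -> mder Y t Y' ->
  mder (fun s => X s *m Y s) t (X' *m Y t + X t *m Y').
Proof.
move=> h1 h2 i j; apply: cder_ext; first by move=> s; rewrite mxE.
rewrite !mxE -big_split /=; apply: cder_sum => k.
by apply: cder_mul.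
Qed.

Lemma mder_adj {X : R -> M} {t X'} : mder X t X' -> mder (fun s => adjmx (X s)) t (adjmx X').
Proof.
move=> h i j; apply: cder_ext; first by move=> s; rewrite /adjmx !mxE.
by rewrite /adjmx !mxE; apply: cder_conj.
Qed.

Lemma mder_dpart {X : R -> M} {t X'} : mder X t X' -> mder (fun s => dpart (X s)) t (dpart X').
Proof.
move=> h i j; apply: cder_ext; first by move=> s; rewrite /dpart !mxE.
rewrite /dpart !mxE; case: ifP => _ //; exact: cder_cst.
Qed.

Lemma mder_bpart {X : R -> M} {t X'} : mder X t X' -> mder (fun s => bpart (X s)) t (bpart X').
Proof.
move=> h i j; apply: cder_ext; first by move=> s; rewrite /bpart !mxE.
rewrite /bpart !mxE; case: ifP => _ //; exact: cder_cst.
Qed.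

Definition pair (X Y : M) : C := \sum_(i < N) \sum_(j < N) (X i j)^* * Y i j.

Lemma cder_pair {X Y : R -> M} {t X' Y'} : mder X t X' -> mder Y t Y' ->
  cder (fun s => pair (X s) (Y s)) t (pair X' (Y t) + pair (X t) Y').
Proof.
move=> h1 h2; rewrite /pair -big_split /=; apply: cder_sum => i.
rewrite -big_split /=; apply: cder_sum => j.
exact: cder_mul (cder_conj (h1 i j)) (h2 i j).
Qed.

Lemma Re_pairC (X Y : M) : Re (pair X Y) = Re (pair Y X).
Proof.
rewrite /pair !Re_sum; apply: eq_bigr => i _; rewrite !Re_sum; apply: eq_bigr => j _.
by rewrite !ReM !Rec !Imc; ring.
Qed.

Lemma Re_pair_self (X : M) : Re (pair X X) = \sum_(i < N) \sum_(j < N) nsq (X i j).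
Proof.
rewrite /pair !Re_sum; apply: eq_bigr => i _; rewrite !Re_sum; apply: eq_bigr => j _.
by rewrite Re_conjM.
Qed.

Lemma Re_pair_ge0 (X : M) : 0 <= Re (pair X X).
Proof.
rewrite Re_pair_self; apply: sumr_ge0 => i _; apply: sumr_ge0 => j _; exact: nsq_ge0.
Qed.

Lemma nsq_le_pair (X : M) i j : nsq (X i j) <= Re (pair X X).
Proof.
rewrite Re_pair_self (bigD1 i) //= (bigD1 j) //= -addrA lerDl.
apply: addr_ge0; first by apply: sumr_ge0 => k _; exact: nsq_ge0.
by apply: sumr_ge0 => k _; apply: sumr_ge0 => l _; exact: nsq_ge0.
Qed.

End MLib.

Section PLib.
Context {R : realType} {n : nat} {e : rel 'I_n}.
Local Notation C := (R[i]).
Local Notation N := (nsimp e).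
Local Notation M := ('M[C]_N).
Local Notation Re := (@complex.Re R).
Local Notation Im := (@complex.Im R).

Lemma sum_const_N (a : R) : \sum_(k < N) a = N%:R * a.
Proof. by rewrite sumr_const card_ord mulr_natl. Qed.

Lemma pair_bound (X Z : M) (c : R) : 0 <= c ->
  (forall i j, n1 (Z i j) <= c * \sum_(k < N) (n1 (X i k) + n1 (X k j))) ->
  `|Re (pair X Z)| <= 4 * c * N%:R * Re (pair X X).
Proof.
move=> c0 hZ.
set x := fun i j => n1 (X i j).
have x0 : forall i j, 0 <= x i j by move=> i j; exact: n1_ge0.
set S := \sum_(i < N) \sum_(j < N) x i j ^+ 2.
have S0 : S <= 2 * Re (pair X X).
  rewrite Re_pair_self mulr_sumr; apply: ler_sum => i _.
  rewrite mulr_sumr; apply: ler_sum => j _; exact: n1_sq.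
have st1 : `|Re (pair X Z)| <= \sum_(i < N) \sum_(j < N) x i j * n1 (Z i j).
  rewrite /pair Re_sum; apply: le_trans (ler_norm_sum _ _ _) _.
  apply: ler_sum => i _; rewrite Re_sum; apply: le_trans (ler_norm_sum _ _ _) _.
  apply: ler_sum => j _; exact: Re_conjM_le.
have st2 : \sum_(i < N) \sum_(j < N) x i j * n1 (Z i j) <=
    c * \sum_(i < N) \sum_(j < N) \sum_(k < N)
       (x i j ^+ 2 + x i k ^+ 2 / 2 + x k j ^+ 2 / 2).
  rewrite mulr_sumr; apply: ler_sum => i _.
  rewrite mulr_sumr; apply: ler_sum => j _.
  apply: le_trans (ler_wpM2l (x0 i j) (hZ i j)) _.
  rewrite mulrCA; apply: ler_wpM2l => //.
  rewrite mulr_sumr; apply: ler_sum => k _.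
  rewrite -[n1 (X i k)]/(x i k) -[n1 (X k j)]/(x k j).
  have := x0 i k; have := x0 k j; have := x0 i j.
  have := sqr_ge0 (x i j - x i k); have := sqr_ge0 (x i j - x k j); nra.
have st3 : \sum_(i < N) \sum_(j < N) \sum_(k < N)
       (x i j ^+ 2 + x i k ^+ 2 / 2 + x k j ^+ 2 / 2) = 2 * N%:R * S.
  have e1 : \sum_(i < N) \sum_(j < N) \sum_(k < N) x i j ^+ 2 = N%:R * S.
    rewrite /S mulr_sumr; apply: eq_bigr => i _; rewrite mulr_sumr.
    by apply: eq_bigr => j _; rewrite sum_const_N.
  have e2 : \sum_(i < N) \sum_(j < N) \sum_(k < N) x i k ^+ 2 = N%:R * S.
    rewrite /S mulr_sumr; apply: eq_bigr => i _; by rewrite sum_const_N.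
  have e3 : \sum_(i < N) \sum_(j < N) \sum_(k < N) x k j ^+ 2 = N%:R * S.
    rewrite /S -sum_const_N; apply: eq_bigr => i _; by rewrite exchange_big.
  have -> : \sum_(i < N) \sum_(j < N) \sum_(k < N)
       (x i j ^+ 2 + x i k ^+ 2 / 2 + x k j ^+ 2 / 2) =
     \sum_(i < N) \sum_(j < N) \sum_(k < N) x i j ^+ 2 +
     (\sum_(i < N) \sum_(j < N) \sum_(k < N) x i k ^+ 2) / 2 +
     (\sum_(i < N) \sum_(j < N) \sum_(k < N) x k j ^+ 2) / 2.
    rewrite !mulr_suml -!big_split; apply: eq_bigr => i _.
    rewrite !mulr_suml -!big_split; apply: eq_bigr => j _.
    by rewrite !mulr_suml -!big_split.
  by rewrite e1 e2 e3; field.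
have N0 : 0 <= N%:R :> R by apply: ler0n.
apply: (le_trans st1); apply: (le_trans st2); rewrite st3.
have : c * (2 * N%:R * S) <= c * (2 * N%:R * (2 * Re (pair X X))).
  by apply: ler_wpM2l => //; apply: ler_wpM2l => //; apply: mulr_ge0.
by move=> h; apply: le_trans h _; rewrite le_eqVlt; apply/orP; left; apply/eqP; ring.
Qed.

End PLib.

Section BLib.
Context {R : realType}.

Lemma bnd_on (h dh : R -> R) (a b : R) : a <= b ->
  (forall x : R, is_derive x (1:R) h (dh x)) ->
  exists m, 0 <= m /\ forall s, a <= s -> s <= b -> `|h s| <= m.
Proof.
move=> ab hd.
have c1 : {within `[a, b], continuous h}.
  by apply: derivable_within_continuous => x _; have := hd x => -[].
have c2 : {within `[a, b], continuous (fun x => - h x)}.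
  apply: derivable_within_continuous => x _.
  by have := is_deriveN (hd x) => -[].
have [x1 _ H1] := EVT_max ab c1.
have [x2 _ H2] := EVT_max ab c2.
exists (`|h x1| + `|h x2|); split; first by rewrite addr_ge0.
move=> s sa sb.
have sI : s \in `[a, b]%R by rewrite in_itv /= sa sb.
have := H1 s sI; have := H2 s sI.
have := ler_norm (h x1); have := ler_norm (- h x2); rewrite normrN.
rewrite ler_norml => h1 h2 h3 h4.
have := normr_ge0 (h x1); have := normr_ge0 (h x2); move=> h5 h6.
apply/andP; split; lra.
Qed.

End BLib.

Section Main1.
Context {R : realType} {n : nat} {e : rel 'I_n}.
Local Notation C := (R[i]).
Local Notation N := (nsimp e).
Local Notation M := ('M[C]_N).
Local Notation Re := (@complex.Re R).
Local Notation Im := (@complex.Im R).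
Variable beta : R.
Local Notation ib := (Complex 0 beta : C).

Lemma conj_ib : ib^* = - ib.
Proof. by apply/eqP; rewrite eq_complex /= oppr0 eqxx eqxx. Qed.

Lemma conjc_sum (F : 'I_N -> C) : (\sum_(k < N) F k)^* = \sum_(k < N) (F k)^*.
Proof. by elim/big_rec2: _ => [|k y1 y2 _ <-]; rewrite ?conjc0 ?conjcD. Qed.

Lemma Bop_entry (X : M) a b : Bop beta X a b =
  (if sdim a == (sdim b).+1 then X a b else 0) - (if sdim b == (sdim a).+1 then X b a else 0)^*
  + ib * (if sdim a == sdim b then X a b else 0).
Proof. by rewrite /Bop /dpart /bpart /adjmx !mxE. Qed.

Lemma Bop_herm (X : M) a b : Bop beta X a b + (Bop beta X b a)^* =
  ib * (if sdim a == sdim b then X a b - (X b a)^* else 0).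
Proof.
rewrite !Bop_entry (eq_sym (sdim b) (sdim a)).
case: (sdim a == sdim b); case: (sdim a == (sdim b).+1); case: (sdim b == (sdim a).+1);
rewrite !(conjcD, conjcN, conjcM, conjcK, conjc0, conj_ib); ring.
Qed.

Lemma n1_if (b : bool) (z : C) : n1 (if b then z else 0) <= n1 z.
Proof. by case: b; rewrite ?n10 ?n1_ge0. Qed.

Lemma n1_Bop (X : M) m : (forall i j, n1 (X i j) <= m) ->
  forall a b, n1 (Bop beta X a b) <= (2 + `|beta|) * m.
Proof.
move=> hX a b; rewrite Bop_entry.
apply: le_trans (n1D _ _) _; rewrite n1_iM.
have h1 := le_trans (n1_if (sdim a == (sdim b).+1) (X a b)) (hX a b).
have h2 := le_trans (n1_if (sdim b == (sdim a).+1) (X b a)) (hX b a).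
have h3 := le_trans (n1_if (sdim a == sdim b) (X a b)) (hX a b).
have h4 := n1B (if sdim a == (sdim b).+1 then X a b else 0)
   ((if sdim b == (sdim a).+1 then X b a else 0)^*).
rewrite n1c in h4.
have := normr_ge0 beta => hb.
have h5 : `|beta| * n1 (if sdim a == sdim b then X a b else 0) <= `|beta| * m.
  by apply: ler_wpM2l.
lra.
Qed.

Lemma comm_adj_entry (B Dm : M) i j :
  ((B *m Dm - Dm *m B) - adjmx (B *m Dm - Dm *m B)) i j =
  \sum_(k < N) ((B i k + (B k i)^*) * (Dm j k)^* - (Dm k i)^* * (B k j + (B j k)^*)
     + B i k * (Dm k j - (Dm j k)^*) - (Dm i k - (Dm k i)^*) * B k j).
Proof.
rewrite /adjmx !mxE !conjcD !conjcN !conjc_sum.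
rewrite -!sumrB; apply: eq_bigr => k _.
rewrite !conjcM; ring.
Qed.

End Main1.

Section Main2.
Context {R : realType} {n : nat} {e : rel 'I_n}.
Local Notation C := (R[i]).
Local Notation N := (nsimp e).
Local Notation M := ('M[C]_N).
Local Notation Re := (@complex.Re R).
Local Notation Im := (@complex.Im R).
Variable beta : R.
Local Notation ib := (Complex 0 beta : C).

Lemma n1M_le (z w : C) a b : n1 z <= a -> n1 w <= b -> n1 (z * w) <= a * b.
Proof. by move=> h1 h2; apply: le_trans (n1M _ _) (ler_pM (n1_ge0 _) (n1_ge0 _) h1 h2). Qed.

Lemma n1_4 (a b c d : C) : n1 (a - b + c - d) <= n1 a + n1 b + n1 c + n1 d.
Proof.
apply: le_trans (n1B _ _) _; rewrite lerD2r.
apply: le_trans (n1D _ _) _; rewrite lerD2r.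
exact: n1B.
Qed.

Lemma X_entry (Dm : M) a b : (Dm - adjmx Dm) a b = Dm a b - (Dm b a)^*.
Proof. by rewrite /adjmx !mxE. Qed.

Lemma herm_bound (Dm : M) m : 0 <= m -> (forall i j, n1 (Dm i j) <= m) ->
  forall i j,
  n1 (((Bop beta Dm *m Dm - Dm *m Bop beta Dm) - adjmx (Bop beta Dm *m Dm - Dm *m Bop beta Dm)) i j)
  <= ((`|beta| + (2 + `|beta|)) * m) *
     \sum_(k < N) (n1 ((Dm - adjmx Dm) i k) + n1 ((Dm - adjmx Dm) k j)).
Proof.
move=> m0 hD i j; rewrite comm_adj_entry.
apply: (le_trans (n1_sum _ _ _ _)); rewrite mulr_sumr; apply: ler_sum => k _.
rewrite !X_entry.
set xik := n1 (Dm i k - (Dm k i)^*).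
set xkj := n1 (Dm k j - (Dm j k)^*).
have hB := n1_Bop beta Dm m hD.
have t1 : n1 ((Bop beta Dm i k + (Bop beta Dm k i)^*) * (Dm j k)^*) <= (`|beta| * xik) * m.
  apply: n1M_le; last by rewrite n1c.
  rewrite Bop_herm n1_iM; apply: ler_wpM2l; first exact: normr_ge0.
  exact: n1_if.
have t2 : n1 ((Dm k i)^* * (Bop beta Dm k j + (Bop beta Dm j k)^*)) <= m * (`|beta| * xkj).
  apply: n1M_le; first by rewrite n1c.
  rewrite Bop_herm n1_iM; apply: ler_wpM2l; first exact: normr_ge0.
  exact: n1_if.
have t3 : n1 (Bop beta Dm i k * (Dm k j - (Dm j k)^*)) <= ((2 + `|beta|) * m) * xkj.
  by apply: n1M_le.
have t4 : n1 ((Dm i k - (Dm k i)^*) * Bop beta Dm k j) <= xik * ((2 + `|beta|) * m).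
  by apply: n1M_le.
apply: le_trans (n1_4 _ _ _ _) _.
have : (`|beta| + (2 + `|beta|)) * m * (xik + xkj) =
  (`|beta| * xik) * m + m * (`|beta| * xkj) + ((2 + `|beta|) * m) * xkj + xik * ((2 + `|beta|) * m).
  by ring.
move=> ->; lra.
Qed.

End Main2.

Section Main3.
Context {R : realType} {n : nat} {e : rel 'I_n}.
Local Notation C := (R[i]).
Local Notation N := (nsimp e).
Local Notation M := ('M[C]_N).
Local Notation Re := (@complex.Re R).
Local Notation Im := (@complex.Im R).
Variables (beta : R) (D : R -> M).
Hypothesis HD : dirac_deformation beta D.

Definition Dd t := Bop beta (D t) *m D t - D t *m Bop beta (D t).

Lemma HDd t : mder D t (Dd t).
Proof. exact: (HD.2 t). Qed.

Lemma D0_herm : adjmx (D 0) = D 0.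
Proof.
by rewrite HD.1; apply/matrixP => i j; rewrite /D0 /adjmx !mxE conjcD conjcK addrC.
Qed.

Lemma local_bound a b : a <= b -> exists m, 0 <= m /\
  forall s, a <= s -> s <= b -> forall i j, n1 (D s i j) <= m.
Proof.
move=> ab.
have h : forall p : 'I_N * 'I_N, exists m, 0 <= m /\
    forall s, a <= s -> s <= b -> n1 (D s p.1 p.2) <= m.
  move=> [i j] /=.
  have [m1 [m10 hm1]] := bnd_on _ _ _ _ ab (fun x => (HDd x i j).1).
  have [m2 [m20 hm2]] := bnd_on _ _ _ _ ab (fun x => (HDd x i j).2).
  exists (m1 + m2); split; first by rewrite addr_ge0.
  by move=> s sa sb; rewrite /n1; apply: lerD; [apply: hm1 | apply: hm2].
have [f hf] := boolp.choice h.
exists (\sum_(p : 'I_N * 'I_N) f p); split.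
  by apply: sumr_ge0 => p _; case: (hf p).
move=> s sa sb i j.
case: (hf (i, j)) => f0 /(_ s sa sb) /= H; apply: (le_trans H).
rewrite (bigD1 (i, j)) //= lerDl; apply: sumr_ge0 => p _; by case: (hf p).
Qed.

Lemma pair_eq0 (X : M) : Re (pair X X) = 0 -> X = 0.
Proof.
move=> h; apply/matrixP => i j; rewrite mxE; apply: nsq_eq0.
apply/eqP; rewrite eq_le nsq_ge0 andbT -h; exact: nsq_le_pair.
Qed.

Lemma pair00 : pair (0 : M) 0 = 0.
Proof. by rewrite /pair big1 // => i _; rewrite big1 // => j _; rewrite !mxE mulr0. Qed.

Lemma herm t : adjmx (D t) = D t.
Proof.
pose Xf s := D s - adjmx (D s).
pose Z s := Dd s - adjmx (Dd s).
have hX : forall s, mder Xf s (Z s).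
  by move=> s; apply: mder_sub; [exact: HDd | exact: mder_adj (HDd s)].
pose phi s := Re (pair (Xf s) (Xf s)).
pose dphi s := Re (pair (Z s) (Xf s) + pair (Xf s) (Z s)).
have hphi : forall s : R, is_derive s (1:R) phi (dphi s).
  by move=> s; exact: (cder_pair (hX s) (hX s)).1.
have key : forall a b, a <= b -> (phi a = 0 <-> phi b = 0).
  move=> a b ab.
  have [m [m0 hm]] := local_bound _ _ ab.
  pose c := (`|beta| + (2 + `|beta|)) * m.
  have c0 : 0 <= c by rewrite /c mulr_ge0 // addr_ge0 // addr_ge0.
  apply: (gronwall _ _ _ _ (8 * c * N%:R) ab hphi) => x ax xb.
  rewrite /dphi ReD Re_pairC.
  have := @pair_bound R n e (Xf x) (Z x) c c0 (herm_bound beta (D x) m m0 (hm x ax xb)).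
  rewrite -/(phi x) => hb.
  apply: (le_trans (ler_normD _ _)); lra.
have phi0 : phi 0 = 0.
  by rewrite /phi /Xf D0_herm subrr pair00.
have : phi t = 0.
  have [t0|t0] := leP 0 t.
    by apply/(key 0 t t0).
  by apply/(key t 0 (ltW t0)).
move/pair_eq0 => /eqP; rewrite subr_eq0 => /eqP <-.
by [].
Qed.

End Main3.


Ltac splitall :=
  repeat (match goal with
          | |- context [(?a == ?b :> nat)] => case: (a =P b) => ?
          | |- context [(?a <= ?b)%N] => case: (leqP a b) => ?
          end); try (exfalso; lia).

Section Main4.
Context {R : realType} {n : nat} {e : rel 'I_n}.
Local Notation C := (R[i]).
Local Notation N := (nsimp e).
Local Notation M := ('M[C]_N).
Local Notation Re := (@complex.Re R).
Local Notation Im := (@complex.Im R).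
Variable beta : R.
Local Notation ib := (Complex 0 beta : C).

Definition near (a b : 'I_N) : bool := (sdim a <= (sdim b).+1)%N && (sdim b <= (sdim a).+1)%N.

Definition tpart (X : M) : M := \matrix_(a, b) if near a b then X a b else 0.
Definition rpart (X : M) : M := \matrix_(a, b) if near a b then 0 else X a b.

Lemma herm_entry (Dm : M) : adjmx Dm = Dm -> forall a b, Dm b a = (Dm a b)^*.
Proof. by move=> h a b; rewrite -{1}h /adjmx !mxE. Qed.

Lemma tri_cancel (Dm : M) : adjmx Dm = Dm -> forall i j k, ~~ near i j ->
  Bop beta Dm i k * tpart Dm k j - tpart Dm i k * Bop beta Dm k j = 0.
Proof.
move=> h i j k; rewrite !Bop_entry /tpart !mxE (herm_entry Dm h i k) (herm_entry Dm h k j) /near.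
splitall => //=; move=> _; rewrite ?(conjcD, conjcN, conjcM, conjcK, conjc0); ring.
Qed.


Lemma tri_entry (Dm : M) : rpart Dm = 0 -> forall a b, Dm a b = if near a b then Dm a b else 0.
Proof.
move=> h a b; have := congr1 (fun X : M => X a b) h; rewrite /rpart !mxE.
by case: (near a b) => //= ->.
Qed.

Lemma dpart_comm (Dm : M) : adjmx Dm = Dm -> rpart Dm = 0 ->
  dpart (Bop beta Dm *m Dm - Dm *m Bop beta Dm) =
  (1 - ib) *: (dpart Dm *m bpart Dm - bpart Dm *m dpart Dm).
Proof.
move=> h hr; apply/matrixP => i j; rewrite !mxE -!sumrB mulr_sumr.
case: (sdim i =P (sdim j).+1) => hij.
  apply: eq_bigr => k _; rewrite !mxE (herm_entry Dm h i k) (herm_entry Dm h k j).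
  rewrite (tri_entry Dm hr i k) (tri_entry Dm hr k j) /near.
  splitall => //=; rewrite ?(conjcD, conjcN, conjcM, conjcK, conjc0); ring.
symmetry; apply: big1 => k _.
rewrite !mxE (tri_entry Dm hr i k) (tri_entry Dm hr k j) /near.
splitall => //=; rewrite ?(conjcD, conjcN, conjcM, conjcK, conjc0); ring.
Qed.

Definition fw (X : M) : C := \sum_(i < N) (sdim i)%:R * X i i.

Lemma ftrace (Dm : M) : adjmx Dm = Dm ->
  Re (fw (Bop beta Dm *m Dm - Dm *m Bop beta Dm)) = 2 * Re (pair (dpart Dm) (dpart Dm)).
Proof.
move=> h.
have e1 : fw (Bop beta Dm *m Dm - Dm *m Bop beta Dm) =
    \sum_(i < N) \sum_(k < N) ((sdim i)%:R - (sdim k)%:R) * (Bop beta Dm i k * Dm k i).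
  have ea : \sum_(i < N) \sum_(k < N) ((sdim i)%:R - (sdim k)%:R) * (Bop beta Dm i k * Dm k i)
     = \sum_(i < N) \sum_(k < N) (sdim i)%:R * (Bop beta Dm i k * Dm k i)
       - \sum_(i < N) \sum_(k < N) (sdim k)%:R * (Bop beta Dm i k * Dm k i).
    rewrite -sumrB; apply: eq_bigr => i _.
    by rewrite -sumrB; apply: eq_bigr => k _; rewrite mulrBl.
  have eb : \sum_(i < N) \sum_(k < N) (sdim k)%:R * (Bop beta Dm i k * Dm k i)
     = \sum_(i < N) \sum_(k < N) (sdim i)%:R * (Dm i k * Bop beta Dm k i).
    rewrite exchange_big; apply: eq_bigr => i _; apply: eq_bigr => k _.
    by rewrite [Dm i k * _]mulrC.
  rewrite ea eb /fw -sumrB; apply: eq_bigr => i _.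
  rewrite !mxE mulrBr !mulr_sumr -sumrB; apply: eq_bigr => k _.
  by rewrite !mxE.
have e2 : 2 * Re (pair (dpart Dm) (dpart Dm)) =
    Re (\sum_(i < N) \sum_(k < N) ((dpart Dm i k)^* * dpart Dm i k + (dpart Dm k i)^* * dpart Dm k i)).
  rewrite mulr2n mulrDl mul1r -ReD; congr Re.
  rewrite /pair [X in _ + X = _]exchange_big -big_split; apply: eq_bigr => i _.
  by rewrite -big_split.
rewrite e1 e2; congr Re; apply: eq_bigr => i _; apply: eq_bigr => k _.
rewrite Bop_entry /dpart !mxE (herm_entry Dm h i k).
splitall => //=;
  repeat match goal with H : sdim _ = _ |- _ => rewrite H; clear H end;
  rewrite ?mulrS ?(conjcD, conjcN, conjcM, conjcK, conjc0); ring.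
Qed.

End Main4.


Section D0facts.
Local Close Scope classical_set_scope.
Context {R : realType} {n : nat} {e : rel 'I_n}.
Local Notation C := (R[i]).
Local Notation N := (nsimp e).
Local Notation M := ('M[C]_N).
Local Notation Re := (@complex.Re R).

Lemma simp_card (i : 'I_N) : (0 < #|simp i|)%N.
Proof. by rewrite /simp; case: (enum_val i) => A /= /andP[]. Qed.

Lemma d0_supp (i j : 'I_N) : d0 R e i j != 0 -> sdim i = (sdim j).+1.
Proof.
rewrite /d0 mxE; case: ifP => [/andP[_ /eqP hc] _|]; last by rewrite eqxx.
by rewrite /sdim hc /= prednK // simp_card.
Qed.

Lemma D0_entry (i j : 'I_N) : D0 R e i j = d0 R e i j + (d0 R e j i)^*.
Proof. by rewrite /D0; move: (d0 R e) => d; rewrite /adjmx !mxE. Qed.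

Lemma D0_rpart : rpart (D0 R e) = 0.
Proof.
apply/matrixP => i j; rewrite /rpart mxE [in RHS]mxE /near.
case: ifP => // hn.
have h1 : d0 R e i j = 0.
  apply/eqP; apply/negP => /negP /d0_supp h; move: hn; rewrite h; lia.
have h2 : d0 R e j i = 0.
  apply/eqP; apply/negP => /negP /d0_supp h; move: hn; rewrite h; lia.
by rewrite D0_entry h1 h2 conjc0 addr0.
Qed.


Lemma d0_witness : simple_graph e -> has_edge e ->
  exists i j : 'I_N, (#|simp i| == 2)%N /\ (#|simp j| == 1)%N /\ d0 R e i j != 0.
Proof.
move=> [hs hirr] [x [y exy]].
have xy : x != y by apply/eqP => hxy; move: (hirr x) exy; rewrite -hxy => /negP.
have hA : is_simplex e [set x; y].
  apply/andP; split; first by rewrite cards2 xy.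
  apply/forallP => u; apply/implyP => /set2P hu; apply/forallP => v.
  apply/implyP => /set2P hv; apply/implyP => huv.
  case: hu hv huv => -> [] -> //; rewrite ?eqxx //; by rewrite hs.
have hB : is_simplex e [set x].
  apply/andP; split; first by rewrite cards1.
  apply/forallP => u; apply/implyP => /set1P ->; apply/forallP => v.
  by apply/implyP => /set1P ->; rewrite eqxx.
pose sA : simplex e := exist (fun A => is_simplex e A) [set x; y] hA.
pose sB : simplex e := exist (fun A => is_simplex e A) [set x] hB.
exists (enum_rank sA), (enum_rank sB).
have eA : simp (enum_rank sA) = [set x; y] by rewrite /simp enum_rankK.
have eB : simp (enum_rank sB) = [set x] by rewrite /simp enum_rankK.
rewrite eA eB cards2 xy cards1; split => //; split => //.
rewrite /d0 mxE eA eB cards2 xy cards1 /=.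
have -> : [set x] \subset [set x; y] by rewrite finset.sub1set finset.set21.
have -> : [set x; y] :\: [set x] = [set y].
  apply/setP => u; rewrite !inE.
  have [->|uy] := eqVneq u y; first by rewrite orbT andbT eq_sym xy.
  by rewrite orbF andNb.
rewrite /= big_set1.
by rewrite expf_neq0 // oppr_eq0 oner_eq0.
Qed.

End D0facts.


Section Main5.
Context {R : realType} {n : nat} {e : rel 'I_n}.
Local Notation C := (R[i]).
Local Notation N := (nsimp e).
Local Notation M := ('M[C]_N).
Local Notation Re := (@complex.Re R).
Local Notation Im := (@complex.Im R).
Variables (beta : R) (D : R -> M).
Hypothesis HD : dirac_deformation beta D.
Local Notation ib := (Complex 0 beta : C).

Lemma pair_tr (Dm Z : M) : adjmx Dm = Dm -> pair Dm Z = \tr (Dm *m Z).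
Proof.
move=> h; rewrite /pair /mxtrace exchange_big; apply: eq_bigr => j _.
rewrite mxE; apply: eq_bigr => i _; by rewrite (herm_entry Dm h i j).
Qed.

Lemma tr_comm0 (Dm B : M) : \tr (Dm *m (B *m Dm - Dm *m B)) = 0.
Proof.
rewrite mulmxBr.
have -> : Dm *m (B *m Dm) = (Dm *m B) *m Dm by rewrite mulmxA.
rewrite mxtraceD (raddfN (@mxtrace _ _)) mxtrace_mulC.
by rewrite subrr.
Qed.

Lemma mono2 (f : R -> R) : (forall x : R, is_derive x (1:R) f 0) -> forall t, f t = f 0.
Proof.
move=> h t.
have h1 : forall a b, a <= b -> f a = f b.
  move=> a b ab; apply/eqP; rewrite eq_le; apply/andP; split.
    by apply: (mono_deriv ab h) => x _ _.
  rewrite -lerN2; apply: (@mono_deriv R (fun x => - f x) (fun _ => 0) a b ab) => // x.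
  by rewrite -oppr0; apply: is_deriveN.
have [t0|t0] := leP 0 t; first by rewrite (h1 0 t).
by rewrite (h1 t 0) // ltW.
Qed.

Definition E0 := Re (pair (D 0) (D 0)).

Lemma energy t : Re (pair (D t) (D t)) = E0.
Proof.
pose phi s := Re (pair (D s) (D s)).
have hd : forall s : R, is_derive s (1:R) phi 0.
  move=> s; apply: is_derive_eq; first exact: (cder_pair (HDd beta D HD s) (HDd beta D HD s)).1.
  rewrite ReD Re_pairC pair_tr ?(herm beta D HD) // /Dd tr_comm0.
  by rewrite /= addr0.
by have := mono2 phi hd t; rewrite /phi /E0.
Qed.

Definition mG := 1 + 2 * E0.

Lemma E0_ge0 : 0 <= E0. Proof. exact: Re_pair_ge0. Qed.

Lemma gbound t i j : n1 (D t i j) <= mG.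
Proof.
apply: le_trans (n1_le1 _) _; rewrite /mG lerD2l ler_pM2l //.
by rewrite -(energy t); apply: nsq_le_pair.
Qed.

Lemma mG_ge0 : 0 <= mG.
Proof. by rewrite /mG; have := E0_ge0; lra. Qed.

Lemma mder_rpart {X : R -> M} {t X'} : mder X t X' -> mder (fun s => rpart (X s)) t (rpart X').
Proof.
move=> h i j; apply: cder_ext; first by move=> s; rewrite /rpart !mxE.
rewrite /rpart !mxE; case: ifP => _ //; exact: cder_cst.
Qed.

Lemma tr_split (Dm : M) a b : Dm a b = tpart Dm a b + rpart Dm a b.
Proof. by rewrite /tpart /rpart !mxE; case: ifP; rewrite ?addr0 ?add0r. Qed.

Lemma rpart_bound (Dm : M) : adjmx Dm = Dm -> (forall i j, n1 (Dm i j) <= mG) ->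
  forall i j, n1 (rpart (Bop beta Dm *m Dm - Dm *m Bop beta Dm) i j) <=
     ((2 + `|beta|) * mG) * \sum_(k < N) (n1 (rpart Dm i k) + n1 (rpart Dm k j)).
Proof.
move=> h hb i j.
have c0 : 0 <= (2 + `|beta|) * mG.
  by apply: mulr_ge0; [have := normr_ge0 beta; lra | exact: mG_ge0].
rewrite {1}/rpart mxE; case: ifP => hn.
  rewrite n10; apply: mulr_ge0 => //; apply: sumr_ge0 => k _.
  by apply: addr_ge0; apply: n1_ge0.
rewrite !mxE -sumrB; apply: (le_trans (n1_sum _ _ _ _)).
rewrite mulr_sumr; apply: ler_sum => k _.
have -> : Bop beta Dm i k * Dm k j - Dm i k * Bop beta Dm k j =
   (Bop beta Dm i k * tpart Dm k j - tpart Dm i k * Bop beta Dm k j) +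
   (Bop beta Dm i k * rpart Dm k j - rpart Dm i k * Bop beta Dm k j).
  by rewrite {1}(tr_split Dm k j) {1}(tr_split Dm i k); ring.
rewrite tri_cancel ?hn // add0r.
have hB := n1_Bop beta Dm mG hb.
apply: (le_trans (n1B _ _)).
have t1 := n1M_le _ _ _ _ (hB i k) (lexx (n1 (rpart Dm k j))).
have t2 := n1M_le _ _ _ _ (lexx (n1 (rpart Dm i k))) (hB k j).
move: t1 t2; set u := n1 (rpart Dm i k); set v := n1 (rpart Dm k j); lra.
Qed.

Lemma tri t : rpart (D t) = 0.
Proof.
pose r s := rpart (D s).
pose Z s := rpart (Dd beta D s).
have hX : forall s, mder r s (Z s) by move=> s; apply: mder_rpart; exact: HDd beta D HD s.
pose phi s := Re (pair (r s) (r s)).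
pose dphi s := Re (pair (Z s) (r s) + pair (r s) (Z s)).
have hphi : forall s : R, is_derive s (1:R) phi (dphi s).
  by move=> s; exact: (cder_pair (hX s) (hX s)).1.
pose c := (2 + `|beta|) * mG.
have c0 : 0 <= c.
  by apply: mulr_ge0; [have := normr_ge0 beta; lra | exact: mG_ge0].
have key : forall a b, a <= b -> (phi a = 0 <-> phi b = 0).
  move=> a b ab.
  apply: (gronwall _ _ _ _ (8 * c * N%:R) ab hphi) => x ax xb.
  rewrite /dphi ReD Re_pairC.
  have := @pair_bound R n e (r x) (Z x) c c0
     (rpart_bound (D x) (herm beta D HD x) (fun i j => gbound x i j)).
  rewrite -/(phi x) => hb.
  apply: (le_trans (ler_normD _ _)); lra.
have phi0 : phi 0 = 0.
  by rewrite /phi /r HD.1 D0_rpart pair00.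
have : phi t = 0.
  have [t0|t0] := leP 0 t.
    by apply/(key 0 t t0).
  by apply/(key t 0 (ltW t0)).
by move/pair_eq0.
Qed.

End Main5.


Section Main6.
Context {R : realType} {n : nat} {e : rel 'I_n}.
Local Notation C := (R[i]).
Local Notation N := (nsimp e).
Local Notation M := ('M[C]_N).
Local Notation Re := (@complex.Re R).
Local Notation Im := (@complex.Im R).

Lemma n1_nat (k : nat) : n1 (k%:R : C) = k%:R.
Proof.
have h : forall m : nat, Re (m%:R : C) = m%:R /\ Im (m%:R : C) = 0.
  elim=> [|m [h1 h2]]; first by split.
  by rewrite !mulrS ReD ImD h1 h2 /= addr0.
by case: (h k) => h1 h2; rewrite /n1 h1 h2 normr0 addr0 ger0_norm // ler0n.
Qed.

Lemma n1_1mib (beta : R) : n1 (1 - Complex 0 beta : C) = 1 + `|beta|.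
Proof. by rewrite /n1 ReB ImB /= subr0 sub0r normrN normr1. Qed.

Lemma nsq_if (b : bool) (z : C) : nsq (if b then z else 0) <= nsq z.
Proof. by case: b; rewrite ?nsq0 ?nsq_ge0. Qed.

Lemma dpart_le (X : M) : Re (pair (dpart X) (dpart X)) <= Re (pair X X).
Proof.
rewrite !Re_pair_self; apply: ler_sum => i _; apply: ler_sum => j _.
by rewrite /dpart mxE nsq_if.
Qed.

Lemma Mop_bound (X : M) i j :
  n1 (Mop X i j) <= 8 * N%:R * Re (pair (dpart X) (dpart X)).
Proof.
set G := Re (pair (dpart X) (dpart X)).
have hA : forall a b, n1 ((dpart X + adjmx (dpart X)) a b) ^+ 2 <= 8 * G.
  move=> a b.
  have -> : (dpart X + adjmx (dpart X)) a b = dpart X a b + (dpart X b a)^*.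
    by move: (dpart X) => d; rewrite /adjmx !mxE.
  set u := dpart X a b; set v := dpart X b a.
  have h1 := nsq_le_pair (dpart X) a b; have h2 := nsq_le_pair (dpart X) b a.
  rewrite -/u -/G in h1; rewrite -/v -/G in h2.
  have hs := n1_sq u; have hv := n1_sq v.
  have hd := n1D u (v^*); rewrite n1c in hd.
  have w0 := n1_ge0 (u + v^*).
  have e1 : n1 (u + v^*) ^+ 2 <= (n1 u + n1 v) * (n1 u + n1 v).
    by rewrite expr2; apply: ler_pM.
  have e2 : (n1 u + n1 v) * (n1 u + n1 v) <= 2 * (n1 u ^+ 2) + 2 * (n1 v ^+ 2).
    have := sqr_ge0 (n1 u - n1 v); rewrite !expr2; nra.
  lra.
rewrite /Mop mxE; apply: (le_trans (n1_sum _ _ _ _)).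
have -> : 8 * N%:R * G = N%:R * (8 * G) by ring.
rewrite -sum_const_N; apply: ler_sum => k _.
apply: (le_trans (n1M _ _)).
have := hA i k; have := hA k j.
set p := n1 (_ i k); set q := n1 (_ k j).
have := n1_ge0 ((dpart X + adjmx (dpart X)) i k).
have := n1_ge0 ((dpart X + adjmx (dpart X)) k j).
rewrite -/p -/q; have := sqr_ge0 (p - q); nra.
Qed.

Lemma dpartA (X : M) : dpart (dpart X + adjmx (dpart X)) = dpart X.
Proof.
apply/matrixP => a b; rewrite /dpart /adjmx !mxE.
case: (sdim a =P (sdim b).+1) => h //=.
case: (sdim b =P (sdim a).+1) => h2; first lia.
by rewrite conjc0 addr0.
Qed.

Lemma Mop_zero (X : M) : Mop X = 0 -> Re (pair (dpart X) (dpart X)) = 0.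
Proof.
move=> h.
set A := dpart X + adjmx (dpart X).
have hA : adjmx A = A.
  apply/matrixP => a b; rewrite /A /adjmx !mxE conjcD conjcK addrC //.
have : pair A A = 0 by rewrite pair_tr // -/(Mop X) h mxtrace0.
move=> h0; have : A = 0 by apply: pair_eq0; rewrite h0.
move=> A0; rewrite -dpartA -/A A0.
have -> : dpart (0 : M) = 0 by apply/matrixP => a b; rewrite /dpart !mxE; case: ifP.
by rewrite pair00.
Qed.

End Main6.


Section Main7.
Context {R : realType} {n : nat} {e : rel 'I_n}.
Local Notation C := (R[i]).
Local Notation N := (nsimp e).
Local Notation M := ('M[C]_N).
Local Notation Re := (@complex.Re R).
Local Notation Im := (@complex.Im R).
Variables (beta : R) (D : R -> M).
Hypothesis HD : dirac_deformation beta D.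
Local Notation ib := (Complex 0 beta : C).
Local Notation mG := (mG D).

Lemma dpart_bound (Dm : M) : adjmx Dm = Dm -> rpart Dm = 0 ->
  (forall i j, n1 (Dm i j) <= mG) ->
  forall i j, n1 (dpart (Bop beta Dm *m Dm - Dm *m Bop beta Dm) i j) <=
     ((1 + `|beta|) * mG) * \sum_(k < N) (n1 (dpart Dm i k) + n1 (dpart Dm k j)).
Proof.
move=> h hr hb i j.
have hbb : forall a c, n1 (bpart Dm a c) <= mG.
  by move=> a c; rewrite /bpart mxE; apply: le_trans (n1_if _ _) (hb a c).
rewrite dpart_comm //.
move: (dpart Dm) (bpart Dm) hbb => d b hbb.
rewrite !mxE -sumrB; apply: (le_trans (n1M _ _)); rewrite n1_1mib -mulrA.
apply: ler_wpM2l; first by have := normr_ge0 beta; lra.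
apply: (le_trans (n1_sum _ _ _ _)); rewrite mulr_sumr; apply: ler_sum => k _.
apply: (le_trans (n1B _ _)).
have t1 := n1M_le _ _ _ _ (lexx (n1 (d i k))) (hbb k j).
have t2 := n1M_le _ _ _ _ (hbb i k) (lexx (n1 (d k j))).
lra.
Qed.

Definition gg s := Re (pair (dpart (D s)) (dpart (D s))).
Definition dgg s := Re (pair (dpart (Dd beta D s)) (dpart (D s)) + pair (dpart (D s)) (dpart (Dd beta D s))).

Lemma gg_der s : is_derive s (1:R) gg (dgg s).
Proof.
have h : forall s, mder (fun x => dpart (D x)) s (dpart (Dd beta D s)).
  by move=> x; apply: mder_dpart; exact: HDd beta D HD x.
exact: (cder_pair (h s) (h s)).1.
Qed.

Definition cg := (1 + `|beta|) * mG.
Lemma cg_ge0 : 0 <= cg.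
Proof. by apply: mulr_ge0; [have := normr_ge0 beta; lra | exact: mG_ge0]. Qed.

Lemma dgg_bound s : `|dgg s| <= 8 * cg * N%:R * gg s.
Proof.
rewrite /dgg ReD Re_pairC.
have := @pair_bound R n e (dpart (D s)) (dpart (Dd beta D s)) cg cg_ge0
   (dpart_bound (D s) (herm beta D HD s) (tri beta D HD s) (fun i j => gbound beta D HD s i j)).
rewrite -/(gg s) => hb.
apply: (le_trans (ler_normD _ _)); lra.
Qed.

Lemma gg_le s : gg s <= E0 D.
Proof. by rewrite /gg -(energy beta D HD s); apply: dpart_le. Qed.

Lemma gg_ge0 s : 0 <= gg s.
Proof. exact: Re_pair_ge0. Qed.

Lemma gg_nz : gg 0 != 0 -> forall t, gg t != 0.
Proof.
move=> h0 t; apply/negP => /eqP ht; move/eqP: h0; apply.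
have key : forall a b, a <= b -> (gg a = 0 <-> gg b = 0).
  move=> a b ab; apply: (gronwall _ _ _ _ (8 * cg * N%:R) ab gg_der) => x _ _.
  exact: dgg_bound.
have [t0|t0] := leP 0 t; first by apply/(key 0 t t0).
by apply/(key t 0 (ltW t0)).
Qed.

Definition ff s := Re (fw (D s)).

Lemma ff_der s : is_derive s (1:R) ff (2 * gg s).
Proof.
have h : cder (fun x => fw (D x)) s (fw (Dd beta D s)).
  rewrite /fw; apply: cder_sum => k; apply: cder_cmul; exact: (HDd beta D HD s k k).
apply: is_derive_eq; first exact: h.1.
by rewrite /Dd ftrace // (herm beta D HD s).
Qed.

Lemma ff_bound s : `|ff s| <= \sum_(i < N) (sdim i)%:R * mG.
Proof.
apply: (le_trans (Re_le_n1 _)); rewrite /fw.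
apply: (le_trans (n1_sum _ _ _ _)); apply: ler_sum => i _.
apply: (le_trans (n1M _ _)); rewrite n1_nat; apply: ler_wpM2l; first exact: ler0n.
exact: (gbound beta D HD s i i).
Qed.

Lemma g2_der s : is_derive s (1:R) (fun x => 2 * gg x) (2 * dgg s).
Proof. have := @is_deriveZ R R R gg 2 s 1 (dgg s) (gg_der s); by []. Qed.

Lemma g2_bound s : `|2 * dgg s| <= 2 * (8 * cg * N%:R * E0 D).
Proof.
rewrite normrM ger0_norm // ler_pM2l //.
apply: (le_trans (dgg_bound s)); apply: ler_wpM2l; last exact: gg_le.
by apply: mulr_ge0; [apply: mulr_ge0; [lra | exact: cg_ge0] | exact: ler0n].
Qed.

Lemma g_lim_p eps : 0 < eps -> exists T : R, forall t, T < t -> 2 * gg t < eps.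
Proof.
move=> e0.
exact: (barbalat_p _ _ _ _ _ ff_der g2_der (fun x => mulr_ge0 (ler0n _ 2) (gg_ge0 x)) ff_bound g2_bound eps e0).
Qed.

Lemma g_lim_n eps : 0 < eps -> exists T : R, forall t, t < T -> 2 * gg t < eps.
Proof.
move=> e0.
exact: (barbalat_n _ _ _ _ _ ff_der g2_der (fun x => mulr_ge0 (ler0n _ 2) (gg_ge0 x)) ff_bound g2_bound eps e0).
Qed.

End Main7.


Lemma small_helper {R : realType} (N0 x eps : R) : 0 <= N0 -> 0 < eps -> 0 <= x ->
  x < eps / (4 * N0 + 1) -> 4 * N0 * x < eps.
Proof.
move=> N0p e0 x0 hx.
have K0 : 0 < 4 * N0 + 1 by lra.
rewrite ltr_pdivlMr // in hx.
have : x * (4 * N0 + 1) = 4 * N0 * x + x by ring.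
lra.
Qed.

Lemma gg0 {R : realType} {n : nat} {e : rel 'I_n} (beta : R) (D : R -> 'M[R[i]]_(nsimp e)) :
  dirac_deformation beta D -> simple_graph e -> has_edge e -> gg D 0 != 0.
Proof.
move=> HD hs he.
have [i [j [hi [hj hnz]]]] := d0_witness (R:=R) hs he.
have si : sdim i = 1%N by rewrite /sdim (eqP hi).
have sj : sdim j = 0%N by rewrite /sdim (eqP hj).
have h2 : d0 R e j i = 0.
  apply/eqP; apply/negP => /negP /d0_supp; rewrite si sj //.
apply/eqP => h; have := pair_eq0 (dpart (D 0)) h => /(congr1 (fun X : 'M[R[i]]_(nsimp e) => X i j)).
rewrite /dpart !mxE si sj /= HD.1 D0_entry h2 conjc0 addr0 => h3.
by move: hnz; rewrite h3 eqxx.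
Qed.

Theorem mainTheorem12 (R : realType) (n : nat) (e : rel 'I_n)
  (Hsimple : simple_graph e) (Hedge : has_edge e) (beta : R)
  (D : R -> 'M[R[i]]_(nsimp e)) (HD : dirac_deformation beta D) :
  (forall i j : 'I_(nsimp e),
     complex.Re (Mop (D t) i j) @[t --> +oo] --> (0 : R) /\
     complex.Im (Mop (D t) i j) @[t --> +oo] --> (0 : R) /\
     complex.Re (Mop (D t) i j) @[t --> -oo] --> (0 : R) /\
     complex.Im (Mop (D t) i j) @[t --> -oo] --> (0 : R)) /\
  (forall t : R, Mop (D t) != 0).
Proof.
split.
  move=> i j.
  have N0 : 0 <= (nsimp e)%:R :> R by apply: ler0n.
  have hb : forall t, n1 (Mop (D t) i j) <= 4 * (nsimp e)%:R * (2 * gg D t).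
    move=> t; apply: (le_trans (Mop_bound (D t) i j)); rewrite /gg.
    by rewrite le_eqVlt; apply/orP; left; apply/eqP; ring.
  have K0 : 0 < 4 * (nsimp e)%:R + 1 :> R by lra.
  have gp : forall t, 0 <= 2 * gg D t by move=> t; apply: mulr_ge0; [lra | exact: gg_ge0].
  have P : forall h : R -> R, (forall t, `|h t| <= n1 (Mop (D t) i j)) ->
      h t @[t --> +oo] --> (0:R) /\ h t @[t --> -oo] --> (0:R).
    move=> h hh; split.
      apply: to_cvg_p => eps e0.
      have [T hT] := g_lim_p beta D HD _ (divr_gt0 e0 K0).
      exists T => t Tt; apply: (le_lt_trans (hh t)); apply: (le_lt_trans (hb t)).
      by apply: small_helper => //; apply: hT.
    apply: to_cvg_n => eps e0.
    have [T hT] := g_lim_n beta D HD _ (divr_gt0 e0 K0).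
    exists T => t Tt; apply: (le_lt_trans (hh t)); apply: (le_lt_trans (hb t)).
    by apply: small_helper => //; apply: hT.
  have [h1 h3] := P (fun t => complex.Re (Mop (D t) i j)) (fun t => Re_le_n1 _).
  have [h2 h4] := P (fun t => complex.Im (Mop (D t) i j)) (fun t => Im_le_n1 _).
  by [].
move=> t; apply/negP => /eqP h0.
have := gg_nz beta D HD (gg0 beta D HD Hsimple Hedge) t.
by rewrite /gg (Mop_zero _ h0) eqxx.
Qed.
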